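(* The class of line-graphs of bipartite multigraphs is closed under the following two operations: (1) deletion of a flat edge; (2) addition of a new vertex whose neighborhood is a maximal clique of the graph.
   Context: The line-graph of a multigraph $B$ has the edges of $B$ as vertices, two being adjacent iff they share an endpoint in $B$. An edge of a graph is flat if it is contained in no triangle. *)

(* Defs.v *)
From mathcomp Require Import all_boot.
Set Implicit Arguments. Unset Strict Implicit. Unset Printing Implicit Defensive.

(* A bipartite multigraph B with sides X and Y and edge set T is given by the
   endpoint maps l : T -> X and r : T -> Y (every edge joins a vertex of X to a
   vertex of Y; parallel edges are distinct elements of T with the same
   endpoints). *)

(* g is (isomorphic to -- here identical to, up to naming the edges of B by the
   vertices of g) the line-graph of a bipartite multigraph *)
Definition is_line_bip (T : finType) (g : rel T) : Prop :=
  exists (X Y : finType) (l : T -> X) (r : T -> Y),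
    forall u v : T, g u v = (u != v) && ((l u == l v) || (r u == r v)).

Definition flat_edge (T : finType) (g : rel T) (a b : T) : Prop :=
  g a b /\ ~ (exists c : T, g a c && g b c).

Definition del_edge (T : finType) (g : rel T) (a b : T) : rel T :=
  fun x y => g x y && ~~ (((x == a) && (y == b)) || ((x == b) && (y == a))).

Definition is_clique (T : finType) (g : rel T) (K : {set T}) : bool :=
  [forall x in K, forall y in K, (x != y) ==> g x y].

Definition maximal_clique (T : finType) (g : rel T) (K : {set T}) : Prop :=
  is_clique g K /\ forall K' : {set T}, K \subset K' -> is_clique g K' -> K' = K.

Definition add_vertex (T : finType) (g : rel T) (K : {set T}) : rel (option T) :=
  fun x y => match x, y with
             | Some u, Some v => g u v
             | None, Some v => v \in K
             | Some u, None => u \in K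
             | None, None => false
             end.

(* Main.v *)
Require Import Defs.
From mathcomp Require Import all_boot.

Lemma addL (T : finType) (g : rel T) (X Y : finType) (l : T -> X) (r : T -> Y)
  (x : option X) (K : {set T}) :
  (forall u v, g u v = (u != v) && ((l u == l v) || (r u == r v))) ->
  (forall v, (v \in K) = (Some (l v) == x)) -> is_line_bip (add_vertex g K).
Proof.
move=> H HK.
exists (option X), (option Y), (fun o => if o is Some u then Some (l u) else x),
  (fun o => if o is Some u then Some (r u) else None).
move=> [u|] [v|] /=.
- by rewrite H !(inj_eq Some_inj).
- by rewrite HK orbF.
- by rewrite HK orbF eq_sym.
- by [].
Qed.

Lemma NS (Z: eqType) (z:Z) : (None == Some z) = false. Proof. by []. Qed.

Theorem lemma5 :
  (forall (T : finType) (g : rel T) (a b : T),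
      is_line_bip g -> flat_edge g a b -> is_line_bip (del_edge g a b)) /\
  (forall (T : finType) (g : rel T) (K : {set T}),
      is_line_bip g -> maximal_clique g K -> is_line_bip (add_vertex g K)).
Proof.
split.
- move=> T g a b [X [Y [l [r H]]]] [gab nc].
  have hab : a != b by move: gab; rewrite H => /andP[].
  have hL : forall v, v != a -> v != b -> l v == l b -> l a != l b.
    move=> v va vb lv; apply/negP => lab; apply: nc; exists v.
    by rewrite !H (eq_sym a) (eq_sym b) va vb (eqP lab) eq_sym lv.
  have hR : forall v, v != a -> v != b -> r v == r b -> r a != r b.
    move=> v va vb rv; apply/negP => rab; apply: nc; exists v.
    by rewrite !H (eq_sym a) (eq_sym b) va vb (eqP rab) (eq_sym (r b)) rv !orbT.
  have key : forall v, v != b ->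
     ((l b == l v) || (r b == r v)) && (v != a) =
     (((if l a == l b then None else Some (l b)) == Some (l v))
     || ((if r a == r b then None else Some (r b)) == Some (r v))).
    move=> v vb; case: (eqVneq v a) => [->|va].
      rewrite /= andbF.
      by case: ifP => lab; case: ifP => rab; rewrite ?(inj_eq Some_inj) ?NS /= ?(eq_sym (l b)) ?(eq_sym (r b)) ?lab ?rab.
    have nL : (l a == l b) -> (l b == l v) = false.
      move=> lab; apply/negbTE/negP => E; have := hL v va vb.
      by rewrite (eqP lab) (eqP E) eqxx => /(_ isT).
    have nR : (r a == r b) -> (r b == r v) = false.
      move=> rab; apply/negbTE/negP => E; have := hR v va vb.
      by rewrite (eqP rab) (eqP E) eqxx => /(_ isT).
    rewrite /= andbT.
    by case: ifP => lab; case: ifP => rab; rewrite ?(inj_eq Some_inj) ?NS /= ?(nL lab) ?(nR rab).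
  exists (option X), (option Y),
    (fun u => if (u == b) && (l a == l b) then None else Some (l u)),
    (fun u => if (u == b) && (r a == r b) then None else Some (r u)).
  move=> u v; rewrite /del_edge H.
  case: (eqVneq u b) => [->|ub]; case: (eqVneq v b) => [->|vb] //=.
  + by rewrite andbF /= -key.
  + rewrite andbT orbF (eq_sym (Some (l u))) (eq_sym (Some (r u))) -key //.
    by rewrite (eq_sym (l u)) (eq_sym (r u)) andbA.
  + by rewrite andbF orbF andbT !(inj_eq Some_inj).
- move=> T g K [X [Y [l [r H]]]] [cK maxK].
  have cl : forall x y, x \in K -> y \in K -> x != y -> g x y.
    move=> x y xK yK xy; move/forallP: cK => /(_ x) /implyP /(_ xK) /forallP
      /(_ y) /implyP /(_ yK) /implyP; exact.
  have H' : forall u v, g u v = (u != v) && ((r u == r v) || (l u == l v)).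
    by move=> u v; rewrite H orbC.
  case: (set_0Vmem K) => [K0 | [k kK]].
    by apply: (@addL _ _ _ _ _ _ (None) _ H) => v; rewrite K0 inE.
  case: (boolP [forall u in K, l u == l k]) => [/forall_inP allL | /forall_inPn [k' k'K lk']].
    have -> : K = [set u | l u == l k].
      symmetry; apply: maxK.
        by apply/subsetP => u uK; rewrite inE allL.
      apply/forallP => x; apply/implyP; rewrite inE => xk; apply/forallP => y;
        apply/implyP; rewrite inE => yk; apply/implyP => xy.
      by rewrite H xy (eqP xk) (eqP yk) eqxx.
    by apply: (@addL _ _ _ _ _ _ (Some (l k)) _ H) => v; rewrite inE (inj_eq Some_inj).
  have k'k : k' != k by apply: contraNneq lk' => ->.
  have rk' : r k' == r k.
    by move: (cl _ _ k'K kK k'k); rewrite H k'k (negbTE lk').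
  have -> : K = [set u | r u == r k].
    symmetry; apply: maxK.
      apply/subsetP => u uK; rewrite inE.
      case E: (l u == l k).
        have uk' : u != k' by apply: contraTneq E => ->.
        move: (cl _ _ uK k'K uk'); rewrite H uk' (eqP E) eq_sym (negbTE lk') /=.
        by rewrite (eqP rk').
      have uk : u != k by apply: contraFneq E => ->.
      by move: (cl _ _ uK kK uk); rewrite H uk E.
    apply/forallP => x; apply/implyP; rewrite inE => xk; apply/forallP => y;
      apply/implyP; rewrite inE => yk; apply/implyP => xy.
    by rewrite H xy (eqP xk) (eqP yk) eqxx orbT.
  by apply: (@addL _ _ _ _ _ _ (Some (r k)) _ H') => v; rewrite inE (inj_eq Some_inj).
Qed.
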